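(* Consider a mean-variance team stochastic game as described in the context, with trade-off parameter $\beta\ge 0$. For any two joint policies $\boldsymbol{\mu},\boldsymbol{\mu}'\in\mathcal{U}$, $$J(\boldsymbol{\mu}')-J(\boldsymbol{\mu})=\mathbb{E}_{s\sim\pi^{\boldsymbol{\mu}'},\,\boldsymbol{a}\sim\boldsymbol{\mu}'(\cdot|s)}\big[A_f^{\boldsymbol{\mu}}(s,\boldsymbol{a})\big]+\beta\big(\eta^{\boldsymbol{\mu}'}-\eta^{\boldsymbol{\mu}}\big)^2 .$$
   Context: A team stochastic game consists of a finite set of agents $\mathcal{N}=\{1,\dots,N\}$, a finite state space $\mathcal{S}$, finite action sets $\mathcal{A}_i$ ($i\in\mathcal{N}$) with joint action set $\mathcal{A}=\prod_{i}\mathcal{A}_i$, a transition kernel $P(s'|s,\boldsymbol{a})$ and a common reward function $r:\mathcal{S}\times\mathcal{A}\to\mathbb{R}$. A stationary policy of agent $i$ is a map $\mu_i:\mathcal{S}\to\Delta(\mathcal{A}_i)$; $\mathcal{U}_i$ is the set of such policies. A joint policy $\boldsymbol{\mu}=(\mu_1,\dots,\mu_N)\in\mathcal{U}=\prod_i\mathcal{U}_i$ chooses $\boldsymbol{a}=(a_1,\dots,a_N)$ in state $s$ with probability $\boldsymbol{\mu}(\boldsymbol{a}|s)=\prod_i\mu_i(a_i|s)$, inducing the Markov chain $P^{\boldsymbol{\mu}}(s'|s)=\sum_{\boldsymbol{a}}\boldsymbol{\mu}(\boldsymbol{a}|s)P(s'|s,\boldsymbol{a})$. Standing assumption: for every $\boldsymbol{\mu}\in\mathcal{U}$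 this chain is ergodic, with stationary distribution $\pi^{\boldsymbol{\mu}}$ (so $\pi^{\boldsymbol{\mu}}(s)>0$ for all $s$). Long-run average reward: $\eta^{\boldsymbol{\mu}}=\sum_s\pi^{\boldsymbol{\mu}}(s)\sum_{\boldsymbol{a}}\boldsymbol{\mu}(\boldsymbol{a}|s)r(s,\boldsymbol{a})$; long-run variance: $\zeta^{\boldsymbol{\mu}}=\sum_s\pi^{\boldsymbol{\mu}}(s)\sum_{\boldsymbol{a}}\boldsymbol{\mu}(\boldsymbol{a}|s)(r(s,\boldsymbol{a})-\eta^{\boldsymbol{\mu}})^2$ (equal to $\lim_{T\to\infty}\frac1T\mathbb{E}_{\boldsymbol{\mu}}\sum_{t<T}(r(s_t,\boldsymbol{a}_t)-\eta^{\boldsymbol{\mu}})^2$). For fixed $\beta\ge0$ the mean-variance performance is $J(\boldsymbol{\mu})=J^{\boldsymbol{\mu}}=\eta^{\boldsymbol{\mu}}-\beta\zeta^{\boldsymbol{\mu}}$. Surrogate reward: $f^{\boldsymbol{\mu}}(s,\boldsymbol{a})=r(s,\boldsymbol{a})-\beta(r(s,\boldsymbol{a})-\eta^{\boldsymbol{\mu}})^2$, $f^{\boldsymbol{\mu}}(s)=\sum_{\boldsymbol{a}}\boldsymbol{\mu}(\boldsymbol{a}|s)f^{\boldsymbol{\mu}}(s,\boldsymbol{a})$. The value function $V_f^{\boldsymbol{\mu}}$ is a solution of the Poisson equation $V(s)=f^{\boldsymbol{\mu}}(s)-J^{\boldsymbol{\mu}}+\sum_{s'}P^{\boldsymbol{\mu}}(s'|s)V(s')$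 for all $s$ (formally $V_f^{\boldsymbol{\mu}}(s)=\mathbb{E}_{\boldsymbol{\mu}}[\sum_{t\ge0}(f^{\boldsymbol{\mu}}(s_t,\boldsymbol{a}_t)-J^{\boldsymbol{\mu}})\mid s_0=s]$; it is unique up to an additive constant, which does not affect $A_f^{\boldsymbol{\mu}}$). Action-value function: $Q_f^{\boldsymbol{\mu}}(s,\boldsymbol{a})=f^{\boldsymbol{\mu}}(s,\boldsymbol{a})-J^{\boldsymbol{\mu}}+\sum_{s'}P(s'|s,\boldsymbol{a})V_f^{\boldsymbol{\mu}}(s')$; advantage function: $A_f^{\boldsymbol{\mu}}(s,\boldsymbol{a})=Q_f^{\boldsymbol{\mu}}(s,\boldsymbol{a})-V_f^{\boldsymbol{\mu}}(s)$. *)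

(* Defs.v *)
From mathcomp Require Import all_boot all_order all_algebra.
Set Implicit Arguments. Unset Strict Implicit. Unset Printing Implicit Defensive.
Import Order.TTheory GRing.Theory Num.Theory.
Local Open Scope ring_scope.

Section TeamGame.
Variable R : realFieldType.
Variable N : nat.
Variable S : finType.
Variable A : 'I_N -> finType.

Definition jact := {dffun forall i : 'I_N, A i}.

(* stationary policies of the agents, given as a family mu i s a = mu_i(a|s) *)
Definition policy := forall i : 'I_N, S -> A i -> R.

Definition is_policy (mu : policy) : Prop :=
  (forall i s a, 0 <= mu i s a) /\ (forall i s, \sum_(a : A i) mu i s a = 1).

Definition jprob (mu : policy) (s : S) (a : jact) : R := \prod_(i < N) mu i s (a i).

(* transition kernel P(s'|s,a) := P s a s' *)
Definition is_kernel (P : S -> jact -> S -> R) : Prop :=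
  (forall s a s', 0 <= P s a s') /\ (forall s a, \sum_(s' : S) P s a s' = 1).

(* induced Markov chain P^mu(s'|s) := Pmu P mu s s' *)
Definition Pmu (P : S -> jact -> S -> R) (mu : policy) (s s' : S) : R :=
  \sum_(a : jact) jprob mu s a * P s a s'.

Fixpoint npow (Q : S -> S -> R) (n : nat) : S -> S -> R :=
  match n with
  | 0 => fun s s' => if s == s' then 1 else 0
  | n'.+1 => fun s s' => \sum_(t : S) npow Q n' s t * Q t s'
  end.

(* ergodic (irreducible and aperiodic) finite chain, i.e. regular:
   some power of the transition matrix is entrywise positive *)
Definition ergodic (Q : S -> S -> R) : Prop :=
  exists n, forall s s', 0 < npow Q n s s'.

Definition stationary (Q : S -> S -> R) (pi : S -> R) : Prop :=
  (forall s, 0 <= pi s) /\ (\sum_(s : S) pi s = 1) /\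
  (forall s', \sum_(s : S) pi s * Q s s' = pi s').

Definition eta (r : S -> jact -> R) (mu : policy) (pi : S -> R) : R :=
  \sum_(s : S) pi s * \sum_(a : jact) jprob mu s a * r s a.

Definition zeta (r : S -> jact -> R) (mu : policy) (pi : S -> R) : R :=
  \sum_(s : S) pi s * \sum_(a : jact) jprob mu s a * (r s a - eta r mu pi) ^+ 2.

Definition Jmv (beta : R) (r : S -> jact -> R) (mu : policy) (pi : S -> R) : R :=
  eta r mu pi - beta * zeta r mu pi.

Definition fsur (beta : R) (r : S -> jact -> R) (mu : policy) (pi : S -> R)
  (s : S) (a : jact) : R :=
  r s a - beta * (r s a - eta r mu pi) ^+ 2.

Definition fsur_s (beta : R) (r : S -> jact -> R) (mu : policy) (pi : S -> R)
  (s : S) : R :=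
  \sum_(a : jact) jprob mu s a * fsur beta r mu pi s a.

Definition poisson (P : S -> jact -> S -> R) (beta : R) (r : S -> jact -> R)
  (mu : policy) (pi : S -> R) (V : S -> R) : Prop :=
  forall s, V s = fsur_s beta r mu pi s - Jmv beta r mu pi
                  + \sum_(s' : S) Pmu P mu s s' * V s'.

Definition Qf (P : S -> jact -> S -> R) (beta : R) (r : S -> jact -> R)
  (mu : policy) (pi : S -> R) (V : S -> R) (s : S) (a : jact) : R :=
  fsur beta r mu pi s a - Jmv beta r mu pi + \sum_(s' : S) P s a s' * V s'.

Definition Af (P : S -> jact -> S -> R) (beta : R) (r : S -> jact -> R)
  (mu : policy) (pi : S -> R) (V : S -> R) (s : S) (a : jact) : R :=
  Qf P beta r mu pi V s a - V s.

End TeamGame.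

(* Main.v *)
Require Import Defs.
From mathcomp Require Import all_boot all_order all_algebra.
From mathcomp Require Import ring.
Import Order.TTheory GRing.Theory Num.Theory.
Local Open Scope ring_scope.

Lemma sum_prod_dffun (R : comNzRingType) (I : finType) (T_ : I -> finType)
  (F : forall i, T_ i -> R) :
  \sum_(a : {dffun forall i : I, T_ i}) \prod_(i : I) F i (a i) =
  \prod_(i : I) \sum_(x : T_ i) F i x.
Proof.
rewrite (reindex (@dffun_of_fprod I T_)); last exact/onW_bij/dffun_of_fprod_bij.
transitivity (\sum_(t : fprod T_) \prod_(i in I) [ffun x => F i x] (t i)).
  by apply: eq_bigr => t _; apply: eq_bigr => i _; rewrite !ffunE.
rewrite (@big_fprod R 0 1 *%R +%R _ _ (fun i => [ffun x => F i x])).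
rewrite -(bigA_distr_big_dep (fun i => tagged_with T_ i) (fun i j => untag 0 ([ffun x => F i x]) j)).
apply: eq_bigr => i _.
transitivity (\sum_(x : T_ i) [ffun x => F i x] x); last first.
  by apply: eq_bigr=> x _; rewrite ffunE.
by rewrite (big_tag (fun i => [ffun x => F i x])).
Qed.

Set Implicit Arguments.
Section Sums.
Variables (R : realFieldType) (S T : finType) (q : S -> R) (p : S -> T -> R).
Definition Sm (g : S -> T -> R) := \sum_(s : S) q s * \sum_(a : T) p s a * g s a.

Lemma SmD g1 g2 : Sm (fun s a => g1 s a + g2 s a) = Sm g1 + Sm g2.
Proof.
rewrite /Sm -big_split /=; apply: eq_bigr => s _.
rewrite -mulrDr -big_split /=; congr (_ * _); apply: eq_bigr => a _.
by rewrite mulrDr.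
Qed.

Lemma SmB g1 g2 : Sm (fun s a => g1 s a - g2 s a) = Sm g1 - Sm g2.
Proof.
rewrite /Sm -sumrB /=; apply: eq_bigr => s _.
rewrite -mulrBr -sumrB /=; congr (_ * _); apply: eq_bigr => a _.
by rewrite mulrBr.
Qed.

Lemma SmZ c g : Sm (fun s a => c * g s a) = c * Sm g.
Proof.
rewrite /Sm big_distrr; apply: eq_bigr => s _.
rewrite [RHS]mulrCA [c * _]big_distrr; congr (_ * _); apply: eq_bigr => a _ /=; ring.
Qed.

Hypothesis hp : forall s, \sum_(a : T) p s a = 1.

Lemma SmV h : Sm (fun s _ => h s) = \sum_(s : S) q s * h s.
Proof.
apply: eq_bigr => s _; congr (_ * _).
by rewrite -big_distrl /= hp mul1r.
Qed.

Hypothesis hq : \sum_(s : S) q s = 1.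

Lemma SmC c : Sm (fun _ _ => c) = c.
Proof.
rewrite (SmV (fun _ => c)) -big_distrl /= hq mul1r //.
Qed.
End Sums.
Arguments Sm {R S T}.

Theorem lemma1 (R : realFieldType) (N : nat) (S : finType) (A : 'I_N -> finType)
  (P : S -> jact A -> S -> R) (r : S -> jact A -> R) (beta : R)
  (HP : is_kernel P)
  (Herg : forall mu : policy R S A, is_policy mu -> ergodic (Pmu P mu))
  (hbeta : 0 <= beta)
  (mu mu' : policy R S A) (Hmu : is_policy mu) (Hmu' : is_policy mu')
  (pi pi' : S -> R)
  (Hpi : stationary (Pmu P mu) pi) (Hpi' : stationary (Pmu P mu') pi')
  (V : S -> R) (HV : poisson P beta r mu pi V) :
  Jmv beta r mu' pi' - Jmv beta r mu pi =
    \sum_(s : S) pi' s * \sum_(a : jact A) jprob mu' s a * Af P beta r mu pi V s a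
    + beta * (eta r mu' pi' - eta r mu pi) ^+ 2.
Proof.
have hp : forall s, \sum_(a : jact A) jprob mu' s a = 1.
  move=> s; rewrite /jprob (@sum_prod_dffun R _ _ (fun i x => mu' i s x)); apply: big1 => i _.
  by case: Hmu' => _ ->.
case: Hpi' => _ [hq hst].
set E := eta r mu pi; set E' := eta r mu' pi'; set J := Jmv beta r mu pi.
set c0 := 2 * beta * (E' - E) * E' - beta * (E' - E) ^+ 2 - J.
set PV := fun s a => \sum_(s' : S) P s a s' * V s'.
have Hpt : forall s a, Af P beta r mu pi V s a =
   r s a - beta * (r s a - E') ^+ 2 - (2 * beta * (E' - E)) * r s a + c0
   + PV s a - V s.
  by move=> s a; rewrite /Af /Qf /fsur -/E -/J /c0 /PV; ring.
have -> : \sum_(s : S) pi' s * \sum_(a : jact A) jprob mu' s a * Af P beta r mu pi V s a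
   = Sm pi' (jprob mu') (fun s a => r s a - beta * (r s a - E') ^+ 2
       - (2 * beta * (E' - E)) * r s a + c0 + PV s a - V s).
  by apply: eq_bigr => s _; congr (_ * _); apply: eq_bigr => a _; rewrite Hpt.
rewrite SmB SmD SmD SmB SmB SmZ SmZ SmC // SmV //.
have HPV : Sm pi' (jprob mu') PV = \sum_(s : S) pi' s * V s.
  rewrite /Sm /PV.
  transitivity (\sum_(s : S) \sum_(s' : S) pi' s * Pmu P mu' s s' * V s').
    apply: eq_bigr => s _; rewrite /Pmu.
    transitivity (\sum_(a : jact A) \sum_(s' : S) pi' s * jprob mu' s a * P s a s' * V s').
      rewrite big_distrr /=; apply: eq_bigr => a _.
      rewrite mulrA big_distrr /=; apply: eq_bigr => s' _; ring.
    rewrite exchange_big /=; apply: eq_bigr => s' _.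
    rewrite big_distrr big_distrl /=; apply: eq_bigr => a _; ring.
  rewrite exchange_big /=; apply: eq_bigr => s' _.
  by rewrite -big_distrl /= -hst.
have Hr : Sm pi' (jprob mu') r = E' by [].
have Hz : Sm pi' (jprob mu') (fun s a => (r s a - E') ^+ 2) = zeta r mu' pi' by [].
rewrite HPV Hr Hz /Jmv -/E' /c0 /J /Jmv -/E; ring.
Qed.
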